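(* Let $G$ be an abelian Hausdorff topological group and $\kappa$ a cardinal. The following are equivalent: (i) $G$ contains a subgroup topologically isomorphic to a direct product (with the Tychonoff product topology) of $\kappa$-many non-trivial topological groups; (ii) $G$ contains a topologically independent absolutely summable set of size $\kappa$.
   Context: All groups are abelian; topological groups are Hausdorff. $A\subseteq G$ is absolutely summable if for every family $\{z_a:a\in A\}$ of integers there is $g\in G$ such that for every neighbourhood $U$ of $0$ there is a finite $F\subseteq A$ with $g-\sum_{a\in E}z_aa\in U$ for every finite $E\subseteq A$ containing $F$. $A$ is topologically independent if $0\notin A$ and for every neighbourhood $W$ of $0$ there is a neighbourhood $U$ of $0$ such that for every finite $F\subseteq A$ and all integers $\{z_a:a\in F\}$, $\sum_{a\in F}z_aa\in U$ implies $z_aa\in W$ for all $a\in F$. *)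

(* Defs.v *)
From HB Require Import structures.
From mathcomp Require Import all_boot all_order all_algebra finmap.
From mathcomp Require Import all_classical all_reals all_analysis.
Set Implicit Arguments. Unset Strict Implicit. Unset Printing Implicit Defensive.
Import Order.TTheory GRing.Theory Num.Theory.
Local Open Scope classical_set_scope.
Local Open Scope ring_scope.


(** Abelian (Hausdorff) topological groups are [topologicalZmodType]s
    satisfying [hausdorff_space]. *)

(** [A] is absolutely summable in [G]: for every family of integers
    [(z_a)_{a in A}] (encoded as [z : G -> int], values off [A] irrelevant)
    the net of finite partial sums of [z_a a] converges to some [g]. *)
Definition abs_summable (G : topologicalZmodType) (A : set G) : Prop :=
  forall z : G -> int, exists g : G,
    forall U : set G, nbhs (0 : G) U ->
      exists F : {fset G}, (forall a, a \in F -> A a) /\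
        forall E : {fset G}, (forall a, a \in E -> A a) -> (F `<=` E)%fset ->
          U (g - \sum_(a <- E) a *~ z a).

Definition top_independent (G : topologicalZmodType) (A : set G) : Prop :=
  ~ A 0 /\
  forall W : set G, nbhs (0 : G) W ->
    exists U : set G, nbhs (0 : G) U /\
      forall (F : {fset G}) (z : G -> int), (forall a, a \in F -> A a) ->
        U (\sum_(a <- F) a *~ z a) -> forall a, a \in F -> W (a *~ z a).

(** [f] maps the Tychonoff product [prod_topology H] (with pointwise group
    operations) isomorphically, as a topological group, onto its image in [G]
    (which is then a subgroup of [G] carrying the subspace topology):
    an additive, injective, continuous map that is open onto its image. *)
Definition prod_top_group_embedding (I : Type) (H : I -> topologicalZmodType)
    (G : topologicalZmodType) (f : prod_topology H -> G) : Prop :=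
  [/\ forall x y : prod_topology H, f (fun i => x i + y i) = f x + f y,
      injective f,
      continuous f &
      forall U : set (prod_topology H), open U ->
        exists V : set G, open V /\ f @` U = V `&` range f].

(* Main.v *)
Require Import Defs.
From Stdlib Require Lists.List.
From HB Require Import structures.
From mathcomp Require Import all_boot all_order all_algebra finmap.
From mathcomp Require Import all_classical all_reals all_analysis.
Import Order.TTheory GRing.Theory Num.Theory.
Local Open Scope classical_set_scope.
Local Open Scope ring_scope.


Set Implicit Arguments. Unset Strict Implicit. Unset Printing Implicit Defensive.
Section grp.
Variable M : topologicalZmodType.
Implicit Types (U V : set M).

Lemma nbhs0_add {U} : nbhs (0:M) U ->
  exists V : set M, nbhs (0:M) V /\ forall x y, V x -> V y -> U (x + y).
Proof.
move=> U0.
have := @add_continuous M (0, 0) U; rewrite /= addr0 => /(_ U0).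
case=> -[P Q] /= [P0 Q0] PQ.
exists (P `&` Q); split; first exact: filterI.
by move=> x y [Px _] [_ Qy]; apply: (PQ (x, y)).
Qed.

Lemma nbhs0_sub {U} : nbhs (0:M) U ->
  exists V : set M, nbhs (0:M) V /\ forall x y, V x -> V y -> U (x - y).
Proof.
move=> U0.
have := @sub_continuous M (0, 0) U; rewrite /= subrr => /(_ U0).
case=> -[P Q] /= [P0 Q0] PQ.
exists (P `&` Q); split; first exact: filterI.
by move=> x y [Px _] [_ Qy]; apply: (PQ (x, y)).
Qed.

Lemma nbhs0_opp {U} : nbhs (0:M) U -> nbhs (0:M) [set y | U (- y)].
Proof.
move=> U0; have [V [V0 HV]] := nbhs0_sub U0.
apply: (filterS _ V0) => y Vy; rewrite /= -sub0r; apply: HV.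
  exact: (nbhs_singleton V0).
by [].
Qed.

Lemma nbhs_shift (x : M) U : nbhs x U <-> nbhs (0:M) [set y | U (x + y)].
Proof.
split=> Ux.
  have := @add_continuous M (x, 0) U; rewrite /= addr0 => /(_ Ux).
  case=> -[P Q] /= [P0 Q0] PQ.
  by apply: filterS Q0 => y Qy; apply: (PQ (x, y)); split => //; exact: nbhs_singleton.
have := @add_continuous M (- x, x) [set y | U (x + y)]; rewrite /= addNr.
move=> /(_ Ux); case=> -[P Q] /= [P0 Q0] PQ.
apply: filterS Q0 => y Qy; have := PQ (- x, y); rewrite /= addrA subrr add0r.
by apply; split => //; exact: nbhs_singleton.
Qed.

Lemma hausdorff0 (hM : hausdorff_space M) (x : M) :
  (forall U, nbhs (0:M) U -> U x) -> x = 0.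
Proof.
move=> Hx; apply: hM => A B Ax B0; exists 0; split; last exact: nbhs_singleton.
have := Hx _ (nbhs0_opp (proj1 (nbhs_shift x A) Ax)).
by rewrite /= subrr.
Qed.

Lemma nbhs0_sum (T : eqType) (s : seq T) {U} : nbhs (0:M) U ->
  exists V : set M, nbhs (0:M) V /\
    forall v : T -> M, (forall c, c \in s -> V (v c)) -> U (\sum_(c <- s) v c).
Proof.
elim: s U => [|c s IH] U U0.
  by exists setT; split; [exact: filterT| move=> v _; rewrite big_nil; exact: nbhs_singleton].
have [V1 [V10 HV1]] := nbhs0_add U0.
have [V2 [V20 HV2]] := IH _ V10.
exists (V1 `&` V2); split; first exact: filterI.
move=> v Hv; rewrite big_cons; apply: HV1.
  by have [] := Hv c (mem_head _ _).
apply: HV2 => d ds; have [] := Hv d; last by [].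
by rewrite in_cons ds orbT.
Qed.

End grp.

Set Implicit Arguments. Unset Strict Implicit. Unset Printing Implicit Defensive.

Section prod.
Variables (I : Type) (H : I -> topologicalType).
Local Notation P := (prod_topology H).

Definition box (s : seq {i : I & set (H i)}) : set P :=
  [set y | forall c, List.In c s -> projT2 c (y (projT1 c))].
Definition good (x : P) (s : seq {i : I & set (H i)}) :=
  forall c, List.In c s -> open (projT2 c) /\ projT2 c (x (projT1 c)).

Lemma L1 (x : P) i (V : set (H i)) : nbhs (x i) V -> nbhs x [set y : P | V (y i)].
Proof. move=> Vx; exact: (@proj_continuous {classic I} H i x V Vx). Qed.

Lemma L2 (x : P) s : (forall c, List.In c s -> nbhs (x (projT1 c)) (projT2 c)) ->
  nbhs x (box s).
Proof.
elim: s => [_|c s IH Hs].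
  have -> : box [::] = setT by apply/seteqP; split => // y _ c [].
  exact: filterT.
have := filterI (L1 (Hs c (or_introl erefl))) (IH (fun d ds => Hs d (or_intror ds))).
move=> HH; apply: filterS (HH (nbhs_filter x)) => y [yc ys] d [cd|ds]; last exact: ys.
by rewrite -cd.
Qed.

Lemma L3 (x : P) (A : set P) : nbhs x A -> exists s, good x s /\ box s `<=` A.
Proof.
move=> Ax.
pose F := filter_from [set s | good x s] box.
have FF : Filter F.
  apply: filter_from_filter; first by exists [::].
  move=> s1 s2 g1 g2; exists (s1 ++ s2).
    by move=> c cs; case: (List.in_app_or _ _ _ cs) => [/g1|/g2].
  by move=> y Hy; split=> c cs; apply: Hy; apply: List.in_or_app; [left|right].
have : F --> x.
  rewrite (@cvg_sup (forall i, H i) I (fun i => Topological.class (initial_topology (fun f : (forall i, H i) => f i)))) //.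
  move=> i A' /=; rewrite (@nbhsE (initial_topology (fun f : (forall i, H i) => f i))) => -[B [oB Bx] BA'].
  case: oB => O oO OB.
  exists [:: existT _ i O].
    move=> c [<-|//]; split => //=. by move: Bx; rewrite -OB.
  move=> y Hy; apply: BA'; rewrite -OB /=.
  exact: (Hy (existT _ i O) (or_introl erefl)).
move=> Fx; have [s gs sA] := Fx A Ax.
by exists s.
Qed.

Lemma box_open s : (forall c, List.In c s -> open (projT2 c)) -> open (box s).
Proof.
move=> Hs; rewrite openE => y ys; apply: L2 => c cs.
by apply: open_nbhs_nbhs; split; [exact: Hs | exact: ys].
Qed.

End prod.

Section prodz.
Variables (I : Type) (H : I -> topologicalZmodType).
Local Notation P := (prod_topology H).
Definition zeroP : P := fun i => 0.

Lemma shift_to0 (x : P) (B : set P) : nbhs x B ->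
  nbhs zeroP [set d : P | B (fun i => x i + d i)].
Proof.
move=> /L3 [s [gs sB]].
pose s' := map (fun c : {i : I & set (H i)} => existT (fun i => set (H i)) (projT1 c)
                 [set v | projT2 c (x (projT1 c) + v)]) s.
have : nbhs zeroP (box s').
  apply: L2 => c' /List.in_map_iff [c [<- cs]] /=.
  have [oc xc] := gs c cs.
  rewrite /zeroP; have := proj1 (@nbhs_shift (H (projT1 c)) (x (projT1 c)) (projT2 c)); apply; exact: open_nbhs_nbhs.
apply: filterS => d ds; apply: sB => c cs.
exact: (ds _ (List.in_map _ _ _ cs)).
Qed.

Lemma shift_from0 (x : P) (B : set P) :
  nbhs zeroP [set d : P | B (fun i => x i + d i)] -> nbhs x B.
Proof.
move=> /L3 [s [gs sB]].
pose s' := map (fun c : {i : I & set (H i)} => existT (fun i => set (H i)) (projT1 c)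
                 [set v | projT2 c (- x (projT1 c) + v)]) s.
have : nbhs x (box s').
  apply: L2 => c' /List.in_map_iff [c [<- cs]] /=.
  have [oc xc] := gs c cs.
  apply/nbhs_shift; rewrite /=.
  have : nbhs (0 : H (projT1 c)) (projT2 c) by apply: open_nbhs_nbhs.
  by apply: filterS => v /=; rewrite addKr.
apply: filterS => y ys.
have -> : y = (fun i => x i + (- x i + y i)).
  by apply: functional_extensionality_dep => i; rewrite addrA subrr add0r.
apply: sB => c cs; exact: (ys _ (List.in_map _ _ _ cs)).
Qed.

End prodz.

Set Implicit Arguments. Unset Strict Implicit. Unset Printing Implicit Defensive.

Definition fsmap (T : Type) (K : choiceType) (g : T -> K) (s : seq T) : {fset K} :=
  foldr (fun c acc => (g c |` acc)%fset) fset0 s.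

Lemma fsmapP (T : Type) (K : choiceType) (g : T -> K) (s : seq T) x :
  x \in fsmap g s -> exists c, List.In c s /\ x = g c.
Proof.
elim: s => [|c s IH] /=; first by rewrite inE.
case/fset1UP => [->|/IH [d [ds ->]]]; first by exists c; split => //; left.
by exists d; split => //; right.
Qed.

Lemma fsmap_in (T : Type) (K : choiceType) (g : T -> K) (s : seq T) c :
  List.In c s -> g c \in fsmap g s.
Proof.
elim: s => [//|d s IH] /= [<-|cs]; apply/fset1UP; [left|right] => //.
exact: IH.
Qed.

Section partA.
Variables (G : topologicalZmodType) (I : Type) (H : I -> topologicalZmodType)
  (f : prod_topology H -> G).
Local Notation P := (prod_topology H).
Hypothesis fadd : forall x y : P, f (fun i => x i + y i) = f x + f y.
Hypothesis finj : injective f.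

Lemma f0 : f (zeroP H) = 0.
Proof.
have := fadd (zeroP H) (zeroP H).
have -> : (fun i => zeroP H i + zeroP H i) = zeroP H.
  by apply: functional_extensionality_dep => i; rewrite /zeroP addr0.
by move/(congr1 (fun g => g - f (zeroP H))); rewrite subrr addrK.
Qed.

Lemma fN (x : P) : f (fun i => - x i) = - f x.
Proof.
apply/eqP; rewrite -subr_eq0 opprK -fadd.
have -> : (fun i => - x i + x i) = zeroP H.
  by apply: functional_extensionality_dep => i; rewrite /zeroP addNr.
by rewrite f0.
Qed.

Lemma fB (x y : P) : f (fun i => x i - y i) = f x - f y.
Proof. by rewrite (fadd x (fun i => - y i)) fN. Qed.

Lemma fMn (x : P) (n : nat) : f (fun i => x i *+ n) = f x *+ n.
Proof.
elim: n => [|n IH].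
  have -> : (fun i => x i *+ 0) = zeroP H by [].
  by rewrite f0.
rewrite mulrS -IH -fadd; congr f.
by apply: functional_extensionality_dep => i; rewrite mulrS.
Qed.

Lemma fZ (x : P) (n : int) : f (fun i => x i *~ n) = f x *~ n.
Proof.
case: n => n.
  exact: fMn.
rewrite NegzE.
have -> : (fun i => x i *~ - (Posz n.+1)) = (fun i => - (x i *+ n.+1)).
  by apply: functional_extensionality_dep => i; rewrite mulrNz.
by rewrite fN fMn mulrNz.
Qed.


Hypothesis fcont : continuous f.
Hypothesis fopen : forall U : set P, open U ->
  exists V : set G, open V /\ f @` U = V `&` range f.
Variable h : forall i, H i.
Hypothesis hnz : forall i, h i != 0.

Local Notation Ic := {classic I}.
Definition e (i : I) (v : H i) : P := @dfwith Ic H (zeroP H) i v.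
Definition a (i : I) : G := f (e (h i)).

Lemma e_in (i : I) (v : H i) : e v i = v.
Proof. exact: (@dfwith_in Ic H). Qed.
Lemma e_out (i j : I) (v : H i) : (i : Ic) != j -> e v j = 0.
Proof. exact: (@dfwith_out Ic H). Qed.

Lemma a_inj : injective a.
Proof.
move=> i j /finj /(congr1 (fun x : P => x i)); rewrite e_in.
case: (eqVneq (j : Ic) i) => [-> //|ne].
by rewrite e_out // => hi; move: (hnz i); rewrite hi eqxx.
Qed.

Lemma eZ (i : I) (n : int) : f (e (h i *~ n)) = a i *~ n.
Proof.
rewrite /a -fZ; congr f; apply: functional_extensionality_dep => j.
case: (eqVneq (i : Ic) j) => [<-|ne]; first by rewrite !e_in.
by rewrite !e_out // mul0rz.
Qed.

Definition Xz (z : G -> int) : P := fun j => h j *~ z (a j).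
Definition rE (s : seq G) (x : P) : P := fun j => if a j \in s then x j else 0.

Lemma sumE (z : G -> int) (s : seq G) : uniq s -> (forall c, c \in s -> range a c) ->
  \sum_(c <- s) c *~ z c = f (rE s (Xz z)).
Proof.
elim: s => [_ _|c s IH /andP [cs us] Hs].
  rewrite big_nil -f0; congr f; apply: functional_extensionality_dep => j.
rewrite big_cons IH //; last by move=> d ds; apply: Hs; rewrite in_cons ds orbT.
have [i _ ci] := Hs c (mem_head _ _); subst c.
rewrite -eZ -fadd; congr f; apply: functional_extensionality_dep => j.
rewrite /rE in_cons.
case: (eqVneq (i : Ic) j) => [<-|ne].
  by rewrite e_in eqxx (negbTE cs) addr0.
rewrite e_out // add0r.
have -> : (a j == a i) = false.
  by apply/negbTE/eqP => /a_inj ji; move: ne; rewrite ji eqxx.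
by [].
Qed.


Lemma fpre0 (U : set G) : nbhs (0 : G) U -> nbhs (zeroP H) (f @^-1` U).
Proof. move=> U0; have U0' : nbhs (f (zeroP H)) U by rewrite f0. exact: fcont U0'. Qed.

Lemma partA_abs : abs_summable (range a).
Proof.
move=> z; exists (f (Xz z)) => U /fpre0 /L3 [s [gs sU]].
exists (fsmap (fun c : {i : I & set (H i)} => a (projT1 c)) s); split.
  by move=> x /fsmapP [c [_ ->]]; exists (projT1 c).
move=> E HE FE; rewrite sumE //; last exact: fset_uniq.
rewrite -fB; apply: sU => c cs.
have aE : a (projT1 c) \in E.
  apply: (fsubsetP FE); exact: (fsmap_in (fun c : {i : I & set (H i)} => a (projT1 c)) cs).
rewrite /rE aE subrr; exact: (gs c cs).2.
Qed.

Lemma partA_ind : top_independent (range a).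
Proof.
split.
  move=> [i _ ai0]; move: ai0; rewrite /a -f0 => /finj /(congr1 (fun x : P => x i)).
  by rewrite e_in /zeroP => hi; move: (hnz i); rewrite hi eqxx.
move=> W /fpre0 /L3 [s [gs sW]].
have ob : open (box s) by apply: box_open => c /gs [].
have [V [oV fV]] := fopen ob.
have zb : box s (zeroP H) by move=> c /gs [].
exists V; split.
  apply: open_nbhs_nbhs; split => //.
  have : (f @` box s) (f (zeroP H)) by exists (zeroP H).
  by rewrite fV f0 => -[].
move=> F z HF VF c cF.
rewrite sumE // in VF; last exact: fset_uniq.
have : (V `&` range f) (f (rE F (Xz z))) by split => //; exists (rE F (Xz z)).
rewrite -fV => -[y ys /finj fy]; subst y.
have [i _ ci] := HF c cF; subst c.
rewrite -eZ; apply: sW => -[j V'] js /=.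
case: (eqVneq (i : Ic) j) => [ij|ne].
  move: V' js; rewrite -ij => V' js; rewrite e_in.
  have := ys _ js; rewrite /= /rE cF //.
rewrite e_out //; exact: (gs _ js).2.
Qed.

End partA.

Lemma partA (G : topologicalZmodType) (I : Type) :
  (exists (H : I -> topologicalZmodType) (f : prod_topology H -> G),
      (forall i, hausdorff_space (H i)) /\
      (forall i, exists h : H i, h != 0) /\
      prod_top_group_embedding f) ->
  (exists A : set G, top_independent A /\ abs_summable A /\ (A #= [set: I])%card).
Proof.
move=> [H [f [_ [nz [fadd finj fcont fopen]]]]].
have [h hnz] : exists h : forall i, H i, forall i, h i != 0.
  by exists (fun i => projT1 (cid (nz i))) => i; exact: (projT2 (cid (nz i))).
exists (range (a f h)); split; first exact: partA_ind.
split; first exact: partA_abs.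
apply: inj_card_eq => i j _ _; exact: a_inj.
Qed.

Set Implicit Arguments. Unset Strict Implicit. Unset Printing Implicit Defensive.

Section cyc.
Variable G : topologicalZmodType.

Definition cycp (a : G) : {pred G} := fun x => `[< exists n : int, x = a *~ n >].

Fact cyc_zmod_closed (a : G) : GRing.zmod_closed (cycp a).
Proof.
split.
  by apply/asboolP; exists 0; rewrite mulr0z.
move=> x y /asboolP [n ->] /asboolP [m ->]; apply/asboolP.
by exists (n - m); rewrite mulrzBr.
Qed.

HB.instance Definition _ (a : G) := GRing.isZmodClosed.Build G (cycp a) (cyc_zmod_closed a).

Record cyc (a : G) := Cyc { cval :> G; cvalP : cval \in cycp a }.

HB.instance Definition _ a := [isSub for (@cval a)].
HB.instance Definition _ a := [Choice of cyc a by <:].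
HB.instance Definition _ a := [SubChoice_isSubZmodule of cyc a by <:].
HB.instance Definition _ a := Topological.copy (cyc a) (initial_topology (@cval a)).

Lemma cvalB a (x y : cyc a) : cval (x - y) = cval x - cval y.
Proof. by []. Qed.

Lemma cyc_sub_cont a : continuous (fun x : cyc a * cyc a => x.1 - x.2).
Proof.
apply: continuous_comp_initial => x.
apply: (@continuous_comp _ _ _ (fun y : cyc a * cyc a => (cval y.1, cval y.2))
   (fun p : G * G => p.1 - p.2)); last exact: sub_continuous.
apply: cvg_pair => /=.
  apply: (@continuous_comp _ _ _ fst (@cval a)); first exact: cvg_fst.
  exact: initial_continuous.
apply: (@continuous_comp _ _ _ snd (@cval a)); first exact: cvg_snd.
exact: initial_continuous.
Qed.

HB.instance Definition _ a :=
  PreTopologicalNmodule_isTopologicalZmodule.Build (cyc a) (@cyc_sub_cont a).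

Lemma cval_cont a : continuous (@cval a).
Proof. exact: initial_continuous. Qed.

Lemma cyc_hausdorff a : hausdorff_space G -> hausdorff_space (cyc a).
Proof.
move=> hG p q pq; apply: val_inj; apply: hG => A B Ap Bq.
have := pq _ _ (cval_cont Ap) (cval_cont Bq).
by case=> x [Ax Bx]; exists (cval x).
Qed.


Lemma cyc_nbhs a (x : cyc a) (V : set (cyc a)) : nbhs x V ->
  exists Q : set G, nbhs (cval x) Q /\ forall y, Q (cval y) -> V y.
Proof.
rewrite (@nbhsE (initial_topology (@cval a))) => -[B [oB Bx] BV].
case: oB => O oO OB; exists O; split.
  by apply: open_nbhs_nbhs; split => //; move: Bx; rewrite -OB.
by move=> y Oy; apply: BV; rewrite -OB.
Qed.

End cyc.

Set Implicit Arguments. Unset Strict Implicit. Unset Printing Implicit Defensive.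

Lemma sum_split (K : choiceType) (R : zmodType) (t : K -> R) (F E : {fset K}) :
  (F `<=` E)%fset -> \sum_(c <- E) t c = \sum_(c <- F) t c + \sum_(c <- (E `\` F)%fset) t c.
Proof.
move=> FE; rewrite (big_fsetID _ (mem F)); congr (_ + _); apply: eq_fbigl => x; rewrite !inE /=.
  by apply/andP/idP => [[]//|xF]; split => //; exact: (fsubsetP FE).
by rewrite andbC.
Qed.

Lemma sum_union (K : choiceType) (R : zmodType) (t : K -> R) (F E : {fset K}) :
  (forall c, c \in E -> c \notin F) ->
  \sum_(c <- (F `|` E)%fset) t c = \sum_(c <- F) t c + \sum_(c <- E) t c.
Proof.
move=> dFE; rewrite (sum_split t (fsubsetUl F E)); congr (_ + _).
apply: eq_fbigl => x; rewrite !inE /=.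
apply/andP/idP => [[xF /orP [xF'|//]]|xE]; first by rewrite xF' in xF.
by split; [exact: dFE | rewrite xE orbT].
Qed.

Section conv.
Variables (G : topologicalZmodType) (A : set G).

Definition conv (t : G -> G) (g : G) :=
  forall U : set G, nbhs (0 : G) U ->
    exists F : {fset G}, (forall c, c \in F -> A c) /\
      forall E : {fset G}, (forall c, c \in E -> A c) -> (F `<=` E)%fset ->
        U (g - \sum_(c <- E) t c).

Lemma conv_uniq (hG : hausdorff_space G) t g1 g2 : conv t g1 -> conv t g2 -> g1 = g2.
Proof.
move=> c1 c2; apply/eqP; rewrite -subr_eq0; apply/eqP; apply: hausdorff0 => // U U0.
have [V [V0 HV]] := nbhs0_sub U0.
have [F1 [F1A HF1]] := c1 _ V0; have [F2 [F2A HF2]] := c2 _ V0.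
have EA : forall c, c \in (F1 `|` F2)%fset -> A c by move=> c /fsetUP [/F1A|/F2A].
have := HV _ _ (HF1 _ EA (fsubsetUl _ _)) (HF2 _ EA (fsubsetUr _ _)).
by rewrite opprB addrA subrK.
Qed.

Lemma conv_add t1 t2 g1 g2 : conv t1 g1 -> conv t2 g2 ->
  conv (fun c => t1 c + t2 c) (g1 + g2).
Proof.
move=> c1 c2 U U0.
have [V [V0 HV]] := nbhs0_add U0.
have [F1 [F1A HF1]] := c1 _ V0; have [F2 [F2A HF2]] := c2 _ V0.
exists (F1 `|` F2)%fset; split; first by move=> c /fsetUP [/F1A|/F2A].
move=> E EA FE.
have := HV _ _ (HF1 _ EA (fsubset_trans (fsubsetUl _ _) FE))
               (HF2 _ EA (fsubset_trans (fsubsetUr _ _) FE)).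
by rewrite big_split /= opprD addrACA.
Qed.

Lemma conv_opp t g : conv t g -> conv (fun c => - t c) (- g).
Proof.
move=> c1 U U0.
have [F [FA HF]] := c1 _ (nbhs0_opp U0).
exists F; split => // E EA FE; have := HF _ EA FE.
by rewrite /= sumrN opprB addrC opprK.
Qed.

End conv.

Set Implicit Arguments. Unset Strict Implicit. Unset Printing Implicit Defensive.

Lemma grp_key (G : zmodType) (g S1 S2 : G) : (g - S1) - (g - (S1 + S2)) = S2.
Proof. by rewrite opprB addrC addrA subrK [S1 + S2]addrC addrK. Qed.

Lemma tail (G : topologicalZmodType) (A : set G) (summ : abs_summable A) (W : set G) :
  nbhs (0 : G) W ->
  exists F0 : {fset G}, (forall c, c \in F0 -> A c) /\
    forall (E : {fset G}) (z : G -> int), (forall c, c \in E -> A c) ->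
      (forall c, c \in E -> c \notin F0) -> W (\sum_(c <- E) c *~ z c).
Proof.
move=> W0; apply: contrapT => NP.
have [V [V0 HV]] := nbhs0_sub W0.
have step_ex : forall F : {fset G}, exists Ez : {fset G} * (G -> int),
   (forall c, c \in F -> A c) ->
   [/\ forall c, c \in Ez.1 -> A c, forall c, c \in Ez.1 -> c \notin F &
       ~ W (\sum_(c <- Ez.1) c *~ Ez.2 c)].
  move=> F; case: (pselect (forall c, c \in F -> A c)) => FA; last first.
    by exists (fset0, fun _ => 0).
  apply: contrapT => Nex; apply: NP; exists F; split => // E z EA EF.
  apply: contrapT => NW; apply: Nex; exists (E, z) => _; by split.
pose step F := projT1 (cid (step_ex F)).
have stepP : forall F, (forall c, c \in F -> A c) ->
   [/\ forall c, c \in (step F).1 -> A c, forall c, c \in (step F).1 -> c \notin F &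
       ~ W (\sum_(c <- (step F).1) c *~ (step F).2 c)].
  by move=> F; exact: (projT2 (cid (step_ex F))).
pose S n := iter n (fun F => (F `|` (step F).1)%fset) fset0.
have SA : forall n c, c \in S n -> A c.
  elim=> [|n IH] c /=; first by rewrite inE.
  case/fsetUP => [/IH //|]; have [EA _ _] := stepP _ IH; exact: EA.
pose En n := (step (S n)).1; pose zn n := (step (S n)).2.
have Smono : forall m k : nat, (S m `<=` S (k + m)%N)%fset.
  move=> m; elim=> [|k IH]; first by rewrite add0n fsubset_refl.
  rewrite addSn; apply: fsubset_trans IH (fsubsetUl _ _).
have ES : forall m, (En m `<=` S m.+1)%fset by move=> m; exact: fsubsetUr.
have Edisj : forall m n c, c \in En m -> c \in En n -> m = n.
  have key : forall m n c, (m < n)%N -> c \in En m -> c \in En n -> False.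
    move=> m n c mn cm cn.
    have [_ nS _] := stepP (S n) (SA n).
    have := nS c cn; apply/negP/negPn.
    have := Smono m.+1 (n - m.+1)%N; rewrite subnK // => /fsubsetP; apply.
    exact: (fsubsetP (ES m)).
  move=> m n c cm cn; case: (ltngtP m n) => // mn; exfalso.
    exact: (key m n c).
  exact: (key n m c).
pose z c := if pselect (exists n, c \in En n) is left e then zn (projT1 (cid e)) c else 0.
have zE : forall n c, c \in En n -> z c = zn n c.
  move=> n c cn; rewrite /z; case: pselect => [e|[]]; last by exists n.
  by case: (cid e) => m cm /=; rewrite (Edisj _ _ _ cm cn).
have [g Hg] := summ z.
have [F0 [F0A HF0]] := Hg V V0.
have cnt : forall n, (forall m, (m < n)%N -> exists c, c \in F0 /\ c \in En m) ->
    (n <= #|` (F0 `&` S n)%fset|)%N.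
  elim=> [//|n IH] Hn.
  have le := IH (fun m mn => Hn m (ltnW mn)).
  have [c [cF cE]] := Hn n (ltnSn n).
  have [_ nS _] := stepP (S n) (SA n).
  have cS := nS c cE.
  apply: (@leq_trans (#|` (c |` (F0 `&` S n))%fset|)).
    by rewrite cardfsU1 inE (negbTE cS) andbF.
  apply: fsubset_leq_card; apply/fsubsetP => x; rewrite !inE.
  case/orP => [/eqP ->|/andP [xF xS]]; apply/andP; split => //.
    by apply/orP; right.
  by apply/orP; left.
have [m [mlt mdisj]] : exists m, (m < (#|` F0|).+1)%N /\ forall c, c \in En m -> c \notin F0.
  apply: contrapT => Nm.
  have h1 := cnt (#|` F0|).+1 (fun m mlt => ltac:(
    apply: contrapT => Nc; apply: Nm; exists m; split => // c cE;
    apply/negP => cF; apply: Nc; exists c; split => //)).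
  have h2 := fsubset_leq_card (fsubsetIl F0 (S (#|` F0|).+1)).
  by have := leq_trans h1 h2; rewrite ltnn.
have [EmA EmS EmW] := stepP (S m) (SA m).
apply: EmW.
have h1 := HF0 F0 F0A (fsubset_refl _).
have UA : forall c, c \in (F0 `|` En m)%fset -> A c.
  by move=> c /fsetUP [/F0A|/EmA].
have h2 := HF0 (F0 `|` En m)%fset UA (fsubsetUl _ _).
have := HV _ _ h1 h2.
rewrite sum_union // grp_key.
congr W; apply: eq_fbigr => c cE; by rewrite (zE m c cE).
Qed.

Set Implicit Arguments. Unset Strict Implicit. Unset Printing Implicit Defensive.

Section partB.
Variables (G : topologicalZmodType) (hG : hausdorff_space G) (I : Type) (A : set G).
Hypothesis hA0 : ~ A 0.
Hypothesis hind : forall W : set G, nbhs (0 : G) W ->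
    exists U : set G, nbhs (0 : G) U /\
      forall (F : {fset G}) (z : G -> int), (forall a, a \in F -> A a) ->
        U (\sum_(a <- F) a *~ z a) -> forall a, a \in F -> W (a *~ z a).
Hypothesis summ : abs_summable A.
Variable b : I -> G.
Hypothesis binj : injective b.
Hypothesis bA : forall i, A (b i).

Definition Hc (i : I) : topologicalZmodType := cyc (b i).
Local Notation P := (prod_topology Hc).

Definition tau (x : P) (c : G) : G :=
  if pselect (exists i, b i = c) is left e then cval (x (projT1 (cid e))) else 0.

Lemma taub x i : tau x (b i) = cval (x i).
Proof.
rewrite /tau; case: pselect => [e|[]]; last by exists i.
by case: (cid e) => j /= /binj ->.
Qed.

Lemma tauN x c : ~ (exists i, b i = c) -> tau x c = 0.
Proof. by rewrite /tau; case: pselect. Qed.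

Lemma taucyc x c : exists n : int, tau x c = c *~ n.
Proof.
case: (pselect (exists i, b i = c)) => [[i <-]|ne].
  rewrite taub; case: (x i) => v /= /asboolP [n ->]; by exists n.
by rewrite tauN //; exists 0; rewrite mulr0z.
Qed.

Definition ztau x c := projT1 (cid (taucyc x c)).
Lemma tauz x c : tau x c = c *~ ztau x c.
Proof. exact: (projT2 (cid (taucyc x c))). Qed.

Lemma tauD (x y : P) : tau (fun i => x i + y i) = (fun c => tau x c + tau y c).
Proof.
apply: funext => c; rewrite /tau; case: pselect => // _; by rewrite addr0.
Qed.

Lemma tauNeg (x : P) : tau (fun i => - x i) = (fun c => - tau x c).
Proof.
apply: funext => c; rewrite /tau; case: pselect => // _; by rewrite oppr0.
Qed.

Lemma conv_ex x : exists g, conv A (tau x) g.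
Proof.
have [g Hg] := summ (ztau x); exists g => U U0.
have [F [FA HF]] := Hg U U0; exists F; split => // E EA FE.
have := HF E EA FE; congr U; congr (_ - _); apply: eq_bigr => c _; by rewrite tauz.
Qed.

Definition Phi (x : P) : G := projT1 (cid (conv_ex x)).
Lemma PhiP x : conv A (tau x) (Phi x).
Proof. exact: (projT2 (cid (conv_ex x))). Qed.

Lemma PhiD (x y : P) : Phi (fun i => x i + y i) = Phi x + Phi y.
Proof.
have h := conv_add (PhiP x) (PhiP y); rewrite -tauD in h.
exact: (conv_uniq hG (PhiP _) h).
Qed.

Lemma PhiN (x : P) : Phi (fun i => - x i) = - Phi x.
Proof.
have h := conv_opp (PhiP x); rewrite -tauNeg in h.
exact: (conv_uniq hG (PhiP _) h).
Qed.

Lemma PhiB (x y : P) : Phi (fun i => x i - y i) = Phi x - Phi y.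
Proof. by have := PhiD x (fun i => - y i); rewrite PhiN. Qed.

Lemma tau_nbhs c (V : set G) : nbhs (0 : G) V -> nbhs (zeroP Hc) [set x | V (tau x c)].
Proof.
move=> V0; case: (pselect (exists i, b i = c)) => [[i <-]|ne].
  have : nbhs (zeroP Hc i) [set y : Hc i | V (cval y)] by exact: (@cval_cont G (b i) 0 V V0).
  move=> h; have := @L1 I Hc (zeroP Hc) i _ h; move=> HH; apply: filterS HH => x /=; by rewrite taub.
have -> : [set x | V (tau x c)] = setT.
  by apply/seteqP; split => // x _; rewrite /= tauN //; exact: nbhs_singleton.
exact: filterT.
Qed.

Lemma tau_nbhs_seq (s : seq G) (V : set G) : nbhs (0 : G) V ->
  nbhs (zeroP Hc) [set x | forall c, c \in s -> V (tau x c)].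
Proof.
move=> V0; elim: s => [|c s IH].
  have -> : [set x : P | forall c, c \in [::] -> V (tau x c)] = setT by apply/seteqP; split.
  exact: filterT.
have := filterI (tau_nbhs c V0) IH.
move=> HH; apply: filterS (HH (nbhs_filter _)) => x [xc xs] d.
rewrite in_cons => /orP [/eqP ->|ds] //; exact: xs.
Qed.


Lemma Phicont0 (W : set G) : nbhs (0 : G) W -> nbhs (zeroP Hc) [set x | W (Phi x)].
Proof.
move=> W0.
have [W1 [W10 HW1]] := nbhs0_add W0.
have [W2 [W20 HW2]] := nbhs0_add W10.
have W21 : forall p, W2 p -> W1 p.
  by move=> p Wp; rewrite -[p]addr0; apply: HW2 => //; exact: nbhs_singleton.
have [F0 [F0A HF0]] := tail summ W20.
have [V [V0 HV]] := nbhs0_sum F0 W20.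
have Nx := tau_nbhs_seq F0 V0.
apply: filterS Nx => x Hx.
have [F' [F'A HF']] := PhiP x W20.
have EA : forall c, c \in (F0 `|` F')%fset -> A c by move=> c /fsetUP [/F0A|/F'A].
have h1 := HF' _ EA (fsubsetUr _ _).
rewrite (sum_split _ (fsubsetUl F0 F')) in h1.
have h2 : W2 (\sum_(c <- F0) tau x c) by apply: HV.
have h3 : W2 (\sum_(c <- ((F0 `|` F') `\` F0)%fset) tau x c).
  rewrite (eq_bigr (fun c => c *~ ztau x c)); last by move=> c _; rewrite tauz.
  apply: HF0.
    by move=> c; rewrite inE => /andP [_ /EA].
  by move=> c; rewrite inE => /andP [].
rewrite /= -[Phi x](subrK (\sum_(c <- F0) tau x c + \sum_(c <- ((F0 `|` F') `\` F0)%fset) tau x c)).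
apply: HW1; first exact: W21.
exact: HW2.
Qed.

Lemma Phicont : continuous Phi.
Proof.
move=> x W WP.
apply: shift_from0.
have := Phicont0 (proj1 (nbhs_shift _ _) WP).
apply: filterS => d /=; by rewrite PhiD.
Qed.

Lemma Phi0_inj (d : P) : Phi d = 0 -> d = zeroP Hc.
Proof.
move=> Pd; apply: functional_extensionality_dep => i; apply: val_inj.
change (cval (d i) = 0); apply: contrapT => ne.
have : ~ (forall U : set G, nbhs (0 : G) U -> U (cval (d i))).
  by move/(hausdorff0 hG).
move=> /existsNP [W /not_implyP [W0 nW]].
have [U [U0 HU]] := hind W0.
have [V [V0 HV]] := nbhs0_sub U0.
have [F' [F'A HF']] := PhiP d V0.
have EA : forall c, c \in (F' `|` [fset b i])%fset -> A c.
  by move=> c /fsetUP [/F'A //|]; rewrite inE => /eqP ->.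
have h := HF' _ EA (fsubsetUl _ _); rewrite Pd in h.
have := HV _ _ (nbhs_singleton V0) h; rewrite !sub0r opprK.
rewrite (eq_bigr (fun c => c *~ ztau d c)); last by move=> c _; rewrite tauz.
move=> /(HU _ _ EA) /(_ (b i)); rewrite -tauz taub => Wd; apply: nW; apply: Wd.
by apply/fsetUP; right; rewrite inE.
Qed.

Lemma Phiinj : injective Phi.
Proof.
move=> x y xy.
have := Phi0_inj (_ : Phi (fun i => x i - y i) = 0).
rewrite PhiB xy subrr => /(_ erefl) h.
apply: functional_extensionality_dep => i; apply/eqP; rewrite -subr_eq0; apply/eqP.
exact: (congr1 (fun f : P => f i) h).
Qed.

Lemma PhiK (D : set P) : nbhs (zeroP Hc) D ->
  exists U0 : set G, nbhs (0 : G) U0 /\ forall d, U0 (Phi d) -> D d.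
Proof.
move=> /L3 [s [gs sD]].
have [W [W0 HW]] : exists W : set G, nbhs (0 : G) W /\
    forall c, List.In c s -> forall y : Hc (projT1 c), W (cval y) -> projT2 c y.
  elim: s gs {sD} => [_|c s IH gs].
    by exists setT; split; [exact: filterT|].
  have [W1 [W10 HW1]] := IH (fun d ds => gs d (or_intror ds)).
  have [oc c0] := gs c (or_introl erefl).
  have [Q [Q0 HQ]] := cyc_nbhs (open_nbhs_nbhs (conj oc c0)).
  exists (W1 `&` Q); split; first exact: filterI.
  move=> d [<-|ds] y [Wy Qy]; [exact: HQ | exact: HW1].
have [U [U0 HU]] := hind W0.
have [V [V0 HV]] := nbhs0_sub U0.
exists V; split => // d Vd.
have [F' [F'A HF']] := PhiP d V0.
pose E := (F' `|` fsmap (fun c : {i : I & set (Hc i)} => b (projT1 c)) s)%fset.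
have EA : forall c, c \in E -> A c.
  by move=> c /fsetUP [/F'A //|/fsmapP [c' [_ ->]]].
have h := HF' _ EA (fsubsetUl _ _).
have := HV _ _ Vd h; rewrite opprB addrC subrK.
rewrite (eq_bigr (fun c => c *~ ztau d c)); last by move=> c _; rewrite tauz.
move=> /(HU _ _ EA) hW.
apply: sD => c cs; apply: (HW c cs).
have := hW (b (projT1 c)); rewrite -tauz taub; apply.
apply/fsetUP; right; exact: (fsmap_in (fun c : {i : I & set (Hc i)} => b (projT1 c)) cs).
Qed.

Lemma Phiopen (O : set P) : open O ->
  exists V : set G, open V /\ Phi @` O = V `&` range Phi.
Proof.
move=> oO.
have Nex : forall x, exists N : set G, O x ->
    [/\ open N, N 0 & forall y, N (Phi y - Phi x) -> O y].
  move=> x; case: (pselect (O x)) => Ox; last by exists setT.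
  have := shift_to0 (open_nbhs_nbhs (conj oO Ox)).
  case/PhiK => U0 [U00 HU0].
  rewrite nbhsE in U00; case: U00 => N [oN N0] NU.
  exists N => _; split => // y Ny.
  have := HU0 (fun i => y i - x i); rewrite PhiB => /(_ (NU _ Ny)).
  congr O; apply: functional_extensionality_dep => i; by rewrite addrC subrK.
pose N x := projT1 (cid (Nex x)).
have NP x : O x -> [/\ open (N x), N x 0 & forall y, N x (Phi y - Phi x) -> O y].
  exact: (projT2 (cid (Nex x))).
exists [set g | exists2 x, O x & N x (g - Phi x)]; split.
  rewrite openE => g [x Ox Ng].
  have [oN N0 _] := NP x Ox.
  apply/nbhs_shift.
  have := proj1 (nbhs_shift _ _) (open_nbhs_nbhs (conj oN Ng)).
  apply: filterS => y Ny; exists x => //; by rewrite addrAC.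
apply/seteqP; split.
  move=> g [x Ox <-]; split; last by exists x.
  have [_ N0 _] := NP x Ox; by exists x => //; rewrite subrr.
move=> g [[x Ox Ng] [y _ gy]]; subst g.
have [_ _ HN] := NP x Ox; exists y => //; exact: HN.
Qed.

End partB.

Lemma getb (G : choiceType) (I : Type) (A : set G) : (A #= [set: I])%card ->
  exists b : I -> G, injective b /\ (forall i, A (b i)) /\ (forall c, A c -> exists i, b i = c).
Proof.
rewrite card_eq_sym => /card_bijP [f [g fK gK]].
exists (fun i => val (f (SigSub (mem_setT i)))); split; [|split].
- move=> i j /val_inj /(can_inj fK) /(congr1 val) //.
- move=> i; exact: set_valP.
- move=> c Ac; exists (val (g (SigSub (mem_set Ac)))).
  have -> : SigSub (mem_setT (val (g (SigSub (mem_set Ac))))) = g (SigSub (mem_set Ac)).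
    exact: val_inj.
  by rewrite gK.
Qed.

Lemma partB (G : topologicalZmodType) (hG : hausdorff_space G) (I : Type) :
  (exists A : set G, top_independent A /\ abs_summable A /\ (A #= [set: I])%card) ->
  (exists (H : I -> topologicalZmodType) (f : prod_topology H -> G),
      (forall i, hausdorff_space (H i)) /\
      (forall i, exists h : H i, h != 0) /\
      prod_top_group_embedding f).
Proof.
move=> [A [[hA0 hind] [summ card]]].
have [b [binj [bA Ab]]] := getb card.
exists (Hc b), (Phi summ binj); split; [|split].
- move=> i; exact: cyc_hausdorff.
- move=> i.
  have bi : b i \in cycp (b i) by apply/asboolP; exists 1; rewrite mulr1z.
  exists (@Cyc G (b i) (b i) bi); apply/eqP => /(congr1 val) /= bi0.
  by apply: hA0; rewrite -bi0; exact: bA.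
split.
- exact: PhiD.
- exact: Phiinj.
- exact: Phicont.
- exact: Phiopen.
Qed.

Unset Implicit Arguments.

Theorem corollary7p3 (G : topologicalZmodType) (hG : hausdorff_space G)
    (I : Type) :
  (exists (H : I -> topologicalZmodType) (f : prod_topology H -> G),
      (forall i, hausdorff_space (H i)) /\
      (forall i, exists h : H i, h != 0) /\
      prod_top_group_embedding f)
  <->
  (exists A : set G, top_independent A /\ abs_summable A /\ (A #= [set: I])%card).
Proof.
split; [exact: partA | exact: partB].
Qed.
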